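(* For $n>2$, the polytope $P(D_n)$ has a regular triangulation all of whose maximal simplices are unimodular with respect to the affine lattice spanned by the vertices of $P(D_n)$.
   Context: Each $g\in S_n$ is identified with its $n\times n$ permutation matrix (entry $(i,j)$ is $1$ iff $g(i)=j$); $P(G)=\mathrm{conv}\{g:g\in G\}$. $D_n\le S_n$ is generated by $r=(1\ 2\ \cdots\ n)$ and $f=(1\ n)(2\ n-1)\cdots(\lfloor\frac{n+1}{2}\rfloor\ \lceil\frac{n+1}{2}\rceil)$. A simplex with vertices $w_1,\dots,w_m$ in an affine lattice $L$ is unimodular in $L$ if $\{w_m-w_1,\dots,w_2-w_1\}$ is a basis of (the linear lattice underlying) $L$. *)

(* Defs.v *)
From HB Require Import structures.
From mathcomp Require Import all_boot all_order all_algebra all_fingroup.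
From mathcomp Require Import reals.
Set Implicit Arguments. Unset Strict Implicit. Unset Printing Implicit Defensive.
Import Order.TTheory GRing.Theory Num.Theory.
Local Open Scope ring_scope.

(* Indices {1,...,n} of the paper are 'I_n = {0,...,n-1} here. *)

Definition rot_perm (n : nat) : 'S_n := perm (@ordS_inj n).
(* f : i |-> n+1-i (paper indexing), i.e. i |-> n-1-i on 'I_n *)
Definition flip_perm (n : nat) : 'S_n := perm (@rev_ord_inj n).

Definition dihedral (n : nat) : {group 'S_n} :=
  <<[set rot_perm n; flip_perm n]>>%G.

(* The permutation matrix of g: entry (i,j) is 1 iff g i = j
   (perm_mx g = row_perm g 1, so (perm_mx g) i j = (g i == j)%:R). *)
Definition pmx (R : realType) (n : nat) (g : 'S_n) : 'M[R]_n := perm_mx g.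

Definition affine_fun (R : realType) (n : nat) (C : 'M[R]_n) (c0 : R)
  (X : 'M[R]_n) : R := \sum_i \sum_j C i j * X i j + c0.

Section Geometry.
Variables (R : realType) (n : nat).
Implicit Types (G S : {set 'S_n}) (h : 'S_n -> R).

Definition aff_indep S : Prop :=
  forall a : 'S_n -> R,
    \sum_(g in S) a g = 0 ->
    \sum_(g in S) a g *: pmx R g = 0 ->
    forall g, g \in S -> a g = 0.

(* A cell of the regular subdivision of the point configuration
   {pmx g | g in G} induced by the heights h: the set of points at which
   some affine function lying weakly below the heights on all points
   touches the heights (a lower face of the lifted configuration). *)
Definition lower_cell G h S : Prop :=
  S \subset G /\
  exists (C : 'M[R]_n) (c0 : R),
    forall g, g \in G ->
      affine_fun C c0 (pmx R g) <= h g /\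
      (affine_fun C c0 (pmx R g) = h g <-> g \in S).

Definition regular_triangulation G h : Prop :=
  forall S, lower_cell G h S -> aff_indep S.

(* S spans the affine hull of the configuration G (i.e. it is a
   full-dimensional, hence maximal, cell). *)
Definition spans_aff_hull G S : Prop :=
  forall g, g \in G ->
    exists a : 'S_n -> R,
      \sum_(s in S) a s = 1 /\ pmx R g = \sum_(s in S) a s *: pmx R s.

(* The linear lattice underlying the affine lattice spanned by the
   points pmx g, g in G: integer combinations with coefficient sum 0. *)
Definition lin_lattice G (M : 'M[R]_n) : Prop :=
  exists z : 'S_n -> int,
    \sum_(g in G) z g = 0 /\ M = \sum_(g in G) (z g)%:~R *: pmx R g.

(* The simplex with vertices pmx s (s in S) is unimodular in the affine
   lattice spanned by G: for a vertex s1, the vectors pmx s - pmx s1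
   (s in S, s <> s1) form a basis of the lattice. *)
Definition unimodular G S : Prop :=
  exists2 s1, s1 \in S &
    (forall s, s \in S -> lin_lattice G (pmx R s - pmx R s1)) /\
    (forall z : 'S_n -> int,
        \sum_(s in S :\ s1) (z s)%:~R *: (pmx R s - pmx R s1) = 0 ->
        forall s, s \in S :\ s1 -> z s = 0) /\
    (forall M, lin_lattice G M ->
        exists z : 'S_n -> int,
          M = \sum_(s in S :\ s1) (z s)%:~R *: (pmx R s - pmx R s1)).

End Geometry.

(* Main.v *)
Require Import Defs.
From HB Require Import structures.
From mathcomp Require Import all_boot all_order all_algebra all_fingroup.
From mathcomp Require Import reals.
From mathcomp Require Import ring lra zify.
Set Implicit Arguments. Unset Strict Implicit. Unset Printing Implicit Defensive.
Import Order.TTheory GRing.Theory Num.Theory.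
Local Open Scope ring_scope.

Lemma pmxE (R : realType) n (g : 'S_n) i j : pmx R g i j = (g i == j)%:R.
Proof. by rewrite /pmx /perm_mx /row_perm !mxE. Qed.

Section D.
Variable m : nat.
Local Notation n := m.+3.
Local Notation I := ('I_n).

Lemma Pinj (a : I) : injective (fun x : I => x + a).
Proof. exact: addIr. Qed.
Lemma Qinj (a : I) : injective (fun x : I => a - x).
Proof. by move=> x y /addrI /oppr_inj. Qed.
Definition Pp a : 'S_n := perm (@Pinj a).
Definition Qp a : 'S_n := perm (@Qinj a).
Lemma PE a x : Pp a x = x + a. Proof. by rewrite permE. Qed.
Lemma QE a x : Qp a x = a - x. Proof. by rewrite permE. Qed.

Lemma PP a b : (Pp a * Pp b)%g = Pp (a + b).
Proof. by apply/permP => x; rewrite permM !PE addrA. Qed.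
Lemma PQ a b : (Pp a * Qp b)%g = Qp (b - a).
Proof. by apply/permP => x; rewrite permM !PE !QE opprD addrA addrAC. Qed.
Lemma QP a b : (Qp a * Pp b)%g = Qp (a + b).
Proof. by apply/permP => x; rewrite permM !PE !QE addrAC. Qed.
Lemma QQ a b : (Qp a * Qp b)%g = Pp (b - a).
Proof. by apply/permP => x; rewrite permM !PE !QE; ring. Qed.

Lemma rotE : rot_perm n = Pp 1.
Proof. by apply/permP => x; rewrite PE /rot_perm permE; apply/val_inj => /=; rewrite modnDmr addn1. Qed.

Lemma flipE : flip_perm n = Qp (-1).
Proof.
apply/permP => x; rewrite QE /flip_perm permE.
have H : rev_ord x + (x + 1) = 0.
  apply/val_inj => /=; rewrite modnDmr addn1.
  case: (ltnP x.+1 n) => h.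
    by rewrite subnK // modnn.
  have -> : x.+1 = n by apply/eqP; rewrite eqn_leq h ltn_ord.
  by rewrite subnn modnn.
move/eqP: H; rewrite addr_eq0 => /eqP ->; ring.
Qed.

Definition Dset := [set g : 'S_n | [exists a, g == Pp a] || [exists a, g == Qp a]].

Lemma inD g : (g \in Dset) = [exists a, g == Pp a] || [exists a, g == Qp a].
Proof. by rewrite inE. Qed.

Lemma PD a : Pp a \in Dset.
Proof. by rewrite inD; apply/orP; left; apply/existsP; exists a. Qed.
Lemma QD a : Qp a \in Dset.
Proof. by rewrite inD; apply/orP; right; apply/existsP; exists a. Qed.

Lemma DcaseP g : g \in Dset -> (exists a, g = Pp a) \/ (exists a, g = Qp a).
Proof.
by rewrite inD => /orP[/existsP[a /eqP ->]|/existsP[a /eqP ->]]; [left|right]; exists a.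
Qed.

Lemma P0 : Pp 0 = 1%g.
Proof. by apply/permP => x; rewrite PE perm1 addr0. Qed.

Lemma Dgroup : group_set Dset.
Proof.
apply/andP; split; first by rewrite -P0 PD.
apply/subsetP => _ /mulsgP[x y /DcaseP Hx /DcaseP Hy ->].
case: Hx => -[a ->]; case: Hy => -[b ->];
  by rewrite ?PP ?PQ ?QP ?QQ ?PD ?QD.
Qed.
Canonical DG := Group Dgroup.

Lemma PX k : (Pp 1%R ^+ k)%g = Pp k%:R.
Proof.
elim: k => [|k IH]; first by rewrite expg0 P0.
by rewrite expgSr IH PP -mulrSr.
Qed.

Lemma dihedralE : (dihedral n : {set _}) = Dset.
Proof.
apply/setP; apply/subset_eqP; apply/andP; split.
  rewrite gen_subG; apply/subsetP => x /set2P[]->.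
    by rewrite rotE PD.
  by rewrite flipE QD.
apply/subsetP => x /DcaseP [[a ->]|[a ->]].
  have -> : Pp a = (rot_perm n ^+ a)%g by rewrite rotE PX natr_Zp.
  by rewrite groupX // mem_gen // !inE eqxx.
have -> : Qp a = (flip_perm n * rot_perm n ^+ (a + 1)%R)%g.
  by rewrite rotE PX natr_Zp flipE QP; congr Qp; ring.
by rewrite groupM ?groupX // mem_gen // !inE eqxx ?orbT.
Qed.

Lemma PQneq a c : Pp a != Qp c.
Proof.
apply/eqP => /permP H; have := H 0; have := H 1.
rewrite !PE !QE add0r subr0 => h1 h0; subst c.
have : (1 + 1 : I) = 0.
  have -> : (1 + 1 : I) = (1 + a) - (a - 1) by ring.
  by rewrite h1 subrr.
by move/(congr1 val) => /=; rewrite modn_small.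
Qed.

Lemma Pinj2 a b : Pp a = Pp b -> a = b.
Proof. by move/permP/(_ 0); rewrite !PE !add0r. Qed.
Lemma Qinj2 a b : Qp a = Qp b -> a = b.
Proof. by move/permP/(_ 0); rewrite !QE !subr0. Qed.

Lemma hit g i j : g \in Dset -> g i = j -> g = Pp (j - i) \/ g = Qp (i + j).
Proof.
case/DcaseP => -[a ->]; rewrite ?PE ?QE => <-; [left|right]; congr (_ _); ring.
Qed.

End D.

Section Real.
Variable R : realType.
Variable m : nat.
Local Notation n := m.+3.
Local Notation I := ('I_n).
Local Notation Pp := (@Pp m).
Local Notation Qp := (@Qp m).
Local Notation Dset := (@Dset m).

Definition hD (g : 'S_n) : R := if [exists a, g == Pp a] then 1 else 0.

Lemma hP a : hD (Pp a) = 1.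
Proof. by rewrite /hD; case: existsP => // -[]; exists a. Qed.
Lemma hQ c : hD (Qp c) = 0.
Proof. by rewrite /hD; case: existsP => // -[a /eqP E]; have := PQneq a c; rewrite E eqxx. Qed.

Lemma sum_ind (x : I) (p : pred I) : \sum_(a | p a) ((a == x)%:R : R) = (p x)%:R.
Proof.
case: (boolP (p x)) => px.
  by rewrite (bigD1 x) //= eqxx big1 ?addr0 // => a /andP[_ /negPf ->].
by rewrite big1 // => a pa; have /negPf -> : a != x by apply: contraNneq px => <-.
Qed.

Lemma eqP1 (i j a : I) : (i + a == j) = (a == j - i).
Proof. by apply/idP/idP => /eqP H; apply/eqP; [rewrite -H|rewrite H]; ring. Qed.
Lemma eqQ1 (i j a : I) : (a - i == j) = (a == i + j).
Proof. by apply/idP/idP => /eqP H; apply/eqP; [rewrite -H|rewrite H]; ring. Qed.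

Lemma affP (p : pred I) C c0 : (forall i j : I, p (j - i) = p (i + j)) ->
  \sum_(a | p a) affine_fun C c0 (pmx R (Pp a)) =
  \sum_(a | p a) affine_fun C c0 (pmx R (Qp a)).
Proof.
move=> Hp; rewrite /affine_fun !big_split /=; congr (_ + _).
rewrite exchange_big [RHS]exchange_big; apply: eq_bigr => i _.
rewrite exchange_big [RHS]exchange_big; apply: eq_bigr => j _.
under eq_bigr => a _ do rewrite pmxE PE.
under [RHS]eq_bigr => a _ do rewrite pmxE QE.
rewrite -!mulr_sumr.
under eq_bigr => a _ do rewrite eqP1.
under [X in _ = _ * X]eq_bigr => a _ do rewrite eqQ1.
by rewrite !sum_ind Hp.
Qed.

Lemma missing S (p : pred I) a0 : lower_cell Dset hD S ->
  (forall i j : I, p (j - i) = p (i + j)) -> p a0 ->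
  exists a, p a /\ Pp a \notin S.
Proof.
move=> [sSD [C [c0 HC]]] Hp pa0.
case: (boolP [exists a, p a && (Pp a \notin S)]) => [/existsP[a /andP[]]|H].
  by exists a.
exfalso.
have allin a : p a -> Pp a \in S.
  move=> pa; apply: contraNT H => Hn; apply/existsP; exists a; by rewrite pa.
have E := affP C c0 Hp.
have E1 : \sum_(a | p a) affine_fun C c0 (pmx R (Pp a)) = \sum_(a | p a) 1.
  apply: eq_bigr => a pa; rewrite -(hP a); apply/(HC _ (PD _)).2; exact: allin.
have E2 : \sum_(a | p a) affine_fun C c0 (pmx R (Qp a)) <= 0.
  apply: sumr_le0 => a _.
  by rewrite -(hQ a); apply: (HC _ (QD _)).1.
have E3 : 0 < \sum_(a | p a) (1 : R).
  rewrite (bigD1 a0) //=; apply: (@lt_le_trans _ _ 1) => //.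
  by rewrite lerDl sumr_ge0.
lra.
Qed.

Lemma sc_ent a (M : 'M[R]_n) i j : (a *: M) i j = a * M i j.
Proof. by rewrite mxE. Qed.

Lemma entry (b : 'S_n -> R) : \sum_(g in Dset) b g *: pmx R g = 0 ->
  forall i j : I, b (Pp (j - i)) + b (Qp (i + j)) = 0.
Proof.
move=> H i j; have E := congr1 (fun M : 'M[R]_n => M i j) H; rewrite /= mxE in E.
rewrite -E summxE (bigD1 (Pp (j - i))) ?PD //= (bigD1 (Qp (i + j))) /=; last first.
  by rewrite QD eq_sym PQneq.
rewrite big1 ?addr0; last first.
  move=> g /andP[/andP[gD gP] gQ]; rewrite mxE pmxE.
  case: (boolP (g i == j)) => [/eqP gij|]; last by rewrite mulr0.
  by case: (hit gD gij) => E'; [move: gP|move: gQ]; rewrite E' eqxx.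
rewrite !sc_ent !pmxE PE QE.
have -> : i + (j - i) = j by ring.
have -> : i + j - i = j by ring.
by rewrite eqxx !mulr1.
Qed.

Section Dep.
Variable b : 'S_n -> R.
Hypothesis Hb : \sum_(g in Dset) b g *: pmx R g = 0.

Lemma depQ c : b (Qp c) = - b (Pp c).
Proof.
by have := entry Hb 0 c; rewrite subr0 add0r addrC => /eqP; rewrite addr_eq0 => /eqP ->.
Qed.

Lemma dep2 a : b (Pp (a + 2%:R)) = b (Pp a).
Proof.
have := entry Hb 1 (a + 1); have := entry Hb 0 (a + 2%:R).
have -> : a + 1 - 1 = a by ring.
have -> : 1 + (a + 1) = a + 2%:R by ring.
rewrite subr0 add0r => E1 E2; apply: (addIr (b (Qp (a + 2%:R)))).
by rewrite E1 E2.
Qed.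

Lemma depodd k : b (Pp k%:R) = b (Pp (odd k)%:R).
Proof.
suff : b (Pp k%:R) = b (Pp (odd k)%:R) /\ b (Pp k.+1%:R) = b (Pp (odd k.+1)%:R) by case.
elim: k => [|k [IH1 IH2]]; first by split.
split=> //.
have -> : (k.+2%:R : I) = k%:R + 2%:R by rewrite -natrD addn2.
by rewrite dep2 IH1 /= negbK.
Qed.

Lemma depclass (a : I) : b (Pp a) = b (Pp (odd a)%:R).
Proof. by rewrite -{1}(natr_Zp a) depodd. Qed.

Lemma depN : odd n -> b (Pp 1) = b (Pp 0).
Proof.
move=> On.
have n0 : (n%:R : I) = 0 by apply/val_inj; rewrite Zp_nat /= modnn.
have -> : (1 : I) = n.+1%:R by rewrite mulrSr n0 add0r.
by move: On => /= On; rewrite depodd /= !negbK; move: On; rewrite !negbK => /negbTE ->.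
Qed.

End Dep.

Lemma valD (x y : I) : nat_of_ord (x + y) = ((x + y : nat) %% n)%N. Proof. by []. Qed.
Lemma valN (x : I) : nat_of_ord (- x) = ((n - x : nat) %% n)%N. Proof. by []. Qed.

Lemma par (i j : I) : ~~ odd n -> odd (nat_of_ord (j - i : I)) = odd (nat_of_ord (i + j : I)).
Proof.
move=> En; have En' : odd n = false by apply/negbTE.
have -> : nat_of_ord (i + j) = ((i + j) %% n)%N by [].
rewrite !odd_mod // !oddD odd_mod // oddB ?(ltnW (ltn_ord i)) // En' /=.
by rewrite addbC.
Qed.

Lemma classmiss S : lower_cell Dset hD S -> forall a : I,
  exists a', Pp a' \notin S /\
   (forall b, \sum_(g in Dset) b g *: pmx R g = 0 -> b (Pp a) = b (Pp a')).
Proof.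
move=> HS a.
case: (boolP (odd n)) => On.
  have [a' [_ Ha']] := @missing S predT 0 HS (fun _ _ => erefl) erefl.
  exists a'; split => // b Hb.
  have E x : b (Pp (odd x)%:R) = b (Pp 0) by case: (odd x); [exact: depN|].
  by rewrite depclass // E -(E a') -depclass.
case: (boolP (odd a)) => Oa.
  have [a' [Oa' Ha']] := @missing S (fun x : I => odd x) 1 HS (fun i j => par i j On) erefl.
  exists a'; split => // b Hb.
  by rewrite depclass // [RHS]depclass // Oa Oa'.
have [a' [Oa' Ha']] := @missing S (fun x : I => ~~ odd x) 0 HS
   (fun i j => congr1 negb (par i j On)) erefl.
exists a'; split => // b Hb.
by rewrite depclass // [RHS]depclass // (negbTE Oa) (negbTE Oa').
Qed.

Lemma restrict (V : zmodType) (S : {set 'S_n}) (F : 'S_n -> V) : S \subset Dset ->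
  \sum_(y in Dset) (if y \in S then F y else 0) = \sum_(y in S) F y.
Proof.
move=> sSD; rewrite [RHS]big_mkcond [LHS]big_mkcond; apply: eq_bigr => y _.
case: (boolP (y \in S)) => yS; first by rewrite (subsetP sSD y yS).
by case: (y \in Dset).
Qed.

Lemma regtri : regular_triangulation Dset hD.
Proof.
move=> S HS a Ha0 Ha g gS.
have sSD : S \subset Dset by case: HS.
pose b y := if y \in S then a y else 0.
have Hb : \sum_(y in Dset) b y *: pmx R y = 0.
  rewrite -[RHS]Ha -(restrict _ sSD); apply: eq_bigr => y _.
  by rewrite /b; case: ifP; rewrite ?scale0r.
have bP c : b (Pp c) = 0.
  have [a' [Na' Ea']] := classmiss HS c.
  by rewrite (Ea' b Hb) /b (negbTE Na').
have <- : b g = a g by rewrite /b gS.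
case/DcaseP: (subsetP sSD g gS) => -[c ->]; first exact: bP.
by rewrite (depQ Hb) bP oppr0.
Qed.

Lemma sum_if (T : finType) (V : zmodType) (A : {pred T}) x (F : T -> V) :
  x \in A -> \sum_(g in A) (if g == x then F g else 0) = F x.
Proof. by move=> xA; rewrite (bigD1 x) //= eqxx big1 ?addr0 // => g /andP[_ /negPf ->]. Qed.

Lemma intr_sum (T : finType) (A : {pred T}) (c : T -> int) :
  (\sum_(g in A) c g)%:~R = \sum_(g in A) (c g)%:~R :> R.
Proof. by elim/big_rec2: _ => // i x y _ <-; rewrite intrD. Qed.

Lemma intcomb S : lower_cell Dset hD S -> spans_aff_hull R Dset S ->
  forall x, x \in Dset -> exists c : 'S_n -> int,
    \sum_(s in S) c s = 1 /\ pmx R x = \sum_(s in S) (c s)%:~R *: pmx R s.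
Proof.
move=> HS Hsp x xD.
have sSD : S \subset Dset by case: HS.
case: (boolP (x \in S)) => xS.
  exists (fun s => if s == x then 1 else 0); split; first by rewrite sum_if.
  rewrite -[LHS](sum_if (fun s => pmx R s) xS); apply: eq_bigr => s _.
  by case: eqP => _; rewrite ?scale1r ?scale0r.
have [a [Ha1 Ha]] := Hsp x xD.
pose b y := if y \in S then a y else if y == x then -1 else 0.
have Hb : \sum_(y in Dset) b y *: pmx R y = 0.
  have -> : \sum_(y in Dset) b y *: pmx R y =
     \sum_(y in Dset) (if y \in S then a y *: pmx R y else 0) +
     \sum_(y in Dset) (if y == x then - pmx R y else 0).
    rewrite -big_split /=; apply: eq_bigr => y _; rewrite /b.
    case: (boolP (y \in S)) => yS.
      have /negPf -> : y != x by apply: contraNneq xS => <-.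
      by rewrite addr0.
    by case: eqP => _; rewrite ?scaleN1r ?scale0r add0r.
  by rewrite restrict // sum_if // -Ha subrr.
have tri y : y \in Dset -> b y = 0 \/ b y = 1 \/ b y = -1.
  have Pc c : b (Pp c) = 0 \/ b (Pp c) = -1.
    have [a' [Na' Ea']] := classmiss HS c.
    by rewrite (Ea' b Hb) /b (negbTE Na'); case: eqP; auto.
  case/DcaseP => -[c ->]; first by case: (Pc c); auto.
  by rewrite (depQ Hb); case: (Pc c) => ->; rewrite ?oppr0 ?opprK; auto.
pose c y : int := (b y == 1)%:Z - (b y == -1)%:Z.
have n01 : ((0:R) == 1) = false by apply/negbTE/eqP => H; lra.
have n0m1 : ((0:R) == -1) = false by apply/negbTE/eqP => H; lra.
have n1m1 : ((1:R) == -1) = false by apply/negbTE/eqP => H; lra.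
have nm11 : ((-1:R) == 1) = false by apply/negbTE/eqP => H; lra.
have bc y : y \in Dset -> b y = (c y)%:~R.
  move=> yD; rewrite /c; case: (tri y yD) => [->|[->|->]];
    by rewrite ?n01 ?n0m1 ?n1m1 ?nm11 ?eqxx.
have ab s : s \in S -> a s = (c s)%:~R by move=> sS; rewrite -bc ?(subsetP sSD) // /b sS.
exists c; split.
  apply/eqP; rewrite -(eqr_int R) intr_sum mulr1z; apply/eqP; rewrite -[RHS]Ha1.
  by apply: eq_bigr => s sS; rewrite ab.
by rewrite Ha; apply: eq_bigr => s sS; rewrite ab.
Qed.

Lemma unimod S : lower_cell Dset hD S -> spans_aff_hull R Dset S ->
  unimodular R Dset S.
Proof.
move=> HS Hsp.
have sSD : S \subset Dset by case: HS.
have indep := regtri HS.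
have oneD : (1%g : 'S_n) \in Dset by rewrite -P0 PD.
have [s1 s1S] : exists2 s1, s1 \in S & True.
  have [a [Ha1 _]] := Hsp 1%g oneD.
  case: (set_0Vmem S) => [S0|[s1 s1S]]; last by exists s1.
  by move: Ha1; rewrite S0 big_set0 => /eqP; rewrite eq_sym oner_eq0.
have s1D := subsetP sSD s1 s1S.
exists s1 => //; split; [|split].
- move=> s sS; have sD := subsetP sSD s sS.
  exists (fun g => (if g == s then 1 else 0) - (if g == s1 then 1 else 0)); split.
    by rewrite sumrB !sum_if ?subrr.
  rewrite (eq_bigr (fun g => (if g == s then pmx R g else 0) - (if g == s1 then pmx R g else 0))).
    by rewrite sumrB !sum_if.
  move=> g _; rewrite intrB scalerBl.
  by case: eqP => _; case: eqP => _; rewrite ?scale1r ?scale0r.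
- move=> z Hz s sS1.
  pose a g : R := if g == s1 then - (\sum_(t in S :\ s1) z t)%:~R else (z g)%:~R.
  have Ea : \sum_(t in S :\ s1) (z t)%:~R = \sum_(t in S :\ s1) a t.
    apply: eq_bigr => t; rewrite in_setD1 => /andP[/negPf nt _].
    by rewrite /a nt.
  have H0 : \sum_(g in S) a g = 0.
    by rewrite (big_setD1 s1 s1S) /= -Ea /a eqxx intr_sum addNr.
  have H1 : \sum_(g in S) a g *: pmx R g = 0.
    rewrite (big_setD1 s1 s1S) /= /a eqxx -[RHS]Hz.
    rewrite [RHS](eq_bigr (fun t => (z t)%:~R *: pmx R t - (z t)%:~R *: pmx R s1)); last first.
      by move=> t _; rewrite scalerBr.
    rewrite sumrB -scaler_suml intr_sum scaleNr addrC; congr (_ - _).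
    apply: eq_bigr => t; rewrite in_setD1 => /andP[/negPf nt _].
    by rewrite nt.
  have := indep a H0 H1 s (subsetP (subD1set S s1) s sS1).
  move: sS1; rewrite in_setD1 => /andP[/negPf ns _].
  by rewrite /a ns => /eqP; rewrite intr_eq0 => /eqP.
- move=> M [z [Hz0 HM]].
  pose W (M : 'M[R]_n) := exists w : 'S_n -> int,
      M = \sum_(s in S :\ s1) (w s)%:~R *: (pmx R s - pmx R s1).
  suff : W M by [].
  have -> : M = \sum_(g in Dset) (z g)%:~R *: (pmx R g - pmx R s1).
    rewrite HM [RHS](eq_bigr (fun g => (z g)%:~R *: pmx R g - (z g)%:~R *: pmx R s1)); last first.
      by move=> g _; rewrite scalerBr.
    by rewrite sumrB -scaler_suml -intr_sum Hz0 scale0r subr0.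
  apply: big_ind.
  + by exists (fun _ => 0); rewrite big1 // => s _; rewrite scale0r.
  + move=> M1 M2 [w1 ->] [w2 ->]; exists (fun s => w1 s + w2 s).
    by rewrite -big_split /=; apply: eq_bigr => s _; rewrite intrD scalerDl.
  + move=> g gD.
    have [c [Hc1 Hc]] := intcomb HS Hsp gD.
    exists (fun s => z g * c s).
    have -> : pmx R g - pmx R s1 = \sum_(s in S :\ s1) (c s)%:~R *: (pmx R s - pmx R s1).
      have E : \sum_(s in S) (c s)%:~R *: (pmx R s - pmx R s1) = pmx R g - pmx R s1.
        rewrite (eq_bigr (fun s => (c s)%:~R *: pmx R s - (c s)%:~R *: pmx R s1)); last first.
          by move=> s _; rewrite scalerBr.
        by rewrite sumrB -scaler_suml -intr_sum Hc1 scale1r Hc.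
      by rewrite -E (big_setD1 s1 s1S) /= subrr scaler0 add0r.
    rewrite scaler_sumr; apply: eq_bigr => s _.
    by rewrite scalerA intrM.
Qed.

End Real.

Theorem proposition3 (R : realType) (n : nat) : (2 < n)%N ->
  exists h : 'S_n -> R,
    regular_triangulation (dihedral n) h /\
    (forall S : {set 'S_n},
       lower_cell (dihedral n) h S ->
       spans_aff_hull R (dihedral n) S ->
       unimodular R (dihedral n) S).
Proof.
case: n => [|[|[|m]]] // _.
exists (@hD R m); rewrite (@dihedralE m); split; first exact: regtri.
exact: unimod.
Qed.
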